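(* Let $n,x$ be integers with $1<x<n$, so that $G=C_{2n}(x,1,n)$ is a $5$-regular circulant graph. If $x=\tfrac{n}{2}$, then $G$ is word-representable and $R(G)\leq 5$.
   Context: Two distinct letters $x,y$ alternate in a word $w$ if, after deleting all other letters from $w$, the resulting word is of the form $xyxy\cdots$ or $yxyx\cdots$ (of even or odd length). A graph $G=(V,E)$ is word-representable if there is a word $w$ over the alphabet $V$, containing every letter of $V$ at least once, such that for all distinct $x,y\in V$, $xy\in E$ if and only if $x$ and $y$ alternate in $w$. A word is $k$-uniform if every letter occurs in it exactly $k$ times; $G$ is $k$-representable if some $k$-uniform word represents it, and the representation number $R(G)$ of a word-representable graph $G$ is the least such $k$. For an integer $m$ and a set $R$ of positive integers each at most $m/2$, the circulant graph $C_m(R)$ has vertex set $\{0,1,\dots,m-1\}$, with $i$ and $j$ adjacent iff $\min(|i-j|,\,m-|i-j|)\in R$. $C_{2n}(x,1,n)$ denotes the circulant graph on $2n$ vertices with jump set $\{1,x,n\}$; it is $5$-regular exactly when $1<x<n$. *)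

(* Defs.v *)
From mathcomp Require Import all_boot.
Set Implicit Arguments. Unset Strict Implicit. Unset Printing Implicit Defensive.

(* x and y alternate in w: after deleting all letters other than x, y,
   the resulting word has no two equal consecutive letters
   (i.e. it is of the form xyxy... or yxyx..., possibly empty). *)
Definition alternate (T : finType) (w : seq T) (x y : T) : bool :=
  let u := [seq z <- w | (z == x) || (z == y)] in
  sorted (fun a b => a != b) u.

Definition represents (T : finType) (E : rel T) (w : seq T) : Prop :=
  (forall v : T, v \in w) /\
  (forall x y : T, x != y -> (E x y <-> alternate w x y)).

Definition word_representable (T : finType) (E : rel T) : Prop :=
  exists w : seq T, represents E w.

Definition uniform (T : finType) (k : nat) (w : seq T) : bool :=
  [forall v : T, count_mem v w == k].

Definition k_representable (T : finType) (E : rel T) (k : nat) : Prop :=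
  exists w : seq T, uniform k w /\ represents E w.

Definition circ_dist (m i j : nat) : nat :=
  let d := if i <= j then j - i else i - j in minn d (m - d).

Definition circulant (m : nat) (R : seq nat) : rel 'I_m :=
  fun i j => (i != j) && (circ_dist m i j \in R).

Definition C2n (n x : nat) : rel 'I_(2 * n) := @circulant (2 * n) [:: 1; x; n].

(* Main.v *)
Require Import Defs.
From mathcomp Require Import all_boot zify.
Set Implicit Arguments. Unset Strict Implicit. Unset Printing Implicit Defensive.

Lemma alt_sym (T : finType) (w : seq T) a b : alternate w a b = alternate w b a.
Proof. by rewrite /alternate; congr sorted; apply: eq_filter => z; rewrite orbC. Qed.

Lemma alt_map (T : finType) (f : T -> T) (w : seq T) a b :
  injective f -> alternate (map f w) (f a) (f b) = alternate w a b.
Proof.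
move=> inj; rewrite /alternate filter_map sorted_map.
rewrite (eq_filter (a2 := fun z => (z == a) || (z == b))); last first.
  by move=> z /=; rewrite !(inj_eq inj).
by apply: eq_sorted => u v /=; rewrite (inj_eq inj).
Qed.

Lemma count_last (T : eqType) (c c' : T) (s : seq T) :
  c != c' -> all (fun z => (z == c) || (z == c')) s -> path (fun u v => u != v) c s ->
  count_mem c (c :: s) = count_mem c' (c :: s) + (last c s == c).
Proof.
elim: s c c' => [|d s IH] c c' neq /=.
  by move=> _ _; rewrite eqxx (negbTE neq).
move=> /andP [hd hall] /andP [ncd hp].
have dc' : d = c'.
  by move: hd; rewrite eq_sym (negbTE ncd) /= => /eqP.
subst d.
have hall' : all (fun z => (z == c') || (z == c)) s.
  by apply: sub_all hall => z; rewrite orbC.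
have H := IH c' c; rewrite eq_sym in H; have {H} := H neq hall' hp.
have hl : (last c' s == c) || (last c' s == c').
  have := mem_last c' s; rewrite inE => /orP [/eqP -> | hm]; first by rewrite eqxx orbT.
  by have := allP hall _ hm.
rewrite /= eqxx (negbTE neq) eq_sym (negbTE neq) /=.
move: hl; case/orP => /eqP ->; rewrite ?eqxx ?(negbTE neq);
  rewrite ?(eq_sym c' c) ?(negbTE neq) /=; lia.
Qed.

Lemma sorted_cycle (T : eqType) (a b : T) (s : seq T) :
  a != b -> all (fun z => (z == a) || (z == b)) s -> count_mem a s = count_mem b s ->
  sorted (fun u v => u != v) s = cycle (fun u v => u != v) s.
Proof.
move=> nab; case: s => [|c s] //= hall hcnt.
rewrite rcons_path; case hp: (path _ c s) => //=.
move/andP: hall => [hc hs].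
case/orP: hc => /eqP ?; subst c.
- have := count_last nab hs hp; move: hcnt => /=.
  rewrite eqxx (negbTE nab); case: (last a s == a) => //=; lia.
- have hs' : all (fun z => (z == b) || (z == a)) s.
    by apply: sub_all hs => z; rewrite orbC.
  have := count_last (c' := a) _ hs' hp; rewrite eq_sym => /(_ nab).
  move: hcnt => /=; rewrite eqxx eq_sym (negbTE nab).
  case: (last b s == b) => //=; lia.
Qed.

Lemma filter_rot (T : Type) (p : pred T) k (w : seq T) :
  exists k', filter p (rot k w) = rot k' (filter p w).
Proof.
exists (size (filter p (take k w))).
have -> : rot k w = drop k w ++ take k w by [].
have e : filter p w = filter p (take k w) ++ filter p (drop k w).
  by rewrite -filter_cat cat_take_drop.
by rewrite filter_cat e rot_size_cat.
Qed.

Lemma alt_rot (T : finType) k (w : seq T) a b :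
  a != b -> count_mem a w = count_mem b w -> alternate (rot k w) a b = alternate w a b.
Proof.
move=> nab hc; rewrite /alternate.
have [k' ->] := filter_rot (fun z => (z == a) || (z == b)) k w.
set s := filter _ w.
have hall : all (fun z => (z == a) || (z == b)) s by apply/allP => z; rewrite mem_filter => /andP [].
have cnt : forall c, (c == a) || (c == b) -> count_mem c s = count_mem c w.
  move=> c hc0; rewrite /s count_filter; apply: eq_count => z /=.
  by case: eqP => // ->.
have hcs : count_mem a s = count_mem b s by rewrite !cnt ?eqxx ?orbT.
rewrite (sorted_cycle nab hall hcs) (sorted_cycle nab) ?rot_cycle //.
- by apply/allP => z; rewrite mem_rot => hz; apply: (allP hall).
- have Hp : perm_eq (rot k' s) s by rewrite perm_rot.
  by rewrite !(permP Hp).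
Qed.

Definition M x := 2 * (2 * x).
Lemma Mpos x : 0 < x -> 0 < M x.
Proof. rewrite /M; lia. Qed.
Definition vx x (Hx : 0 < x) k : 'I_(M x) := Ordinal (ltn_pmod k (Mpos Hx)).
Definition bl x t : seq nat := [:: t; t + (M x - 1); t + x; t + 2 * x; t + 3 * x].
Definition blk x (Hx : 0 < x) t := map (vx Hx) (bl x t).
Definition W x (Hx : 0 < x) := flatten (map (blk Hx) (iota 0 (M x))).
Definition sh x (Hx : 0 < x) (v : 'I_(M x)) := vx Hx v.+1.

Lemma vx_val x (Hx : 0 < x) (v : 'I_(M x)) : vx Hx v = v.
Proof. by apply: val_inj; rewrite /= modn_small. Qed.

Lemma vx_eq x (Hx : 0 < x) k j : (vx Hx k == vx Hx j) = (k %% M x == j %% M x).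
Proof. by []. Qed.

Lemma vxM x (Hx : 0 < x) k : vx Hx (M x + k) = vx Hx k.
Proof. by apply: val_inj; rewrite /= modnDl. Qed.

Lemma sh_vx x (Hx : 0 < x) k : sh Hx (vx Hx k) = vx Hx k.+1.
Proof. by apply: val_inj; rewrite /= -addn1 modnDml addn1. Qed.

Lemma sh_inj x (Hx : 0 < x) : injective (sh Hx).
Proof.
move=> u v; rewrite -(vx_val Hx u) -(vx_val Hx v) !sh_vx => /eqP.
rewrite vx_eq -addn1 -(addn1 v) eqn_modDr -vx_eq => /eqP.
by rewrite !vx_val.
Qed.

Lemma map_sh_blk x (Hx : 0 < x) t : map (sh Hx) (blk Hx t) = blk Hx t.+1.
Proof. by rewrite /blk /bl /= !sh_vx !addSn. Qed.

Lemma blkM x (Hx : 0 < x) : blk Hx (M x) = blk Hx 0.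
Proof. by rewrite /blk /bl /= !vxM !add0n -[in vx Hx (M x)](addn0 (M x)) vxM. Qed.

Lemma mapW x (Hx : 0 < x) : map (sh Hx) (W Hx) = rot 5 (W Hx).
Proof.
rewrite /W map_flatten -map_comp.
rewrite (eq_map (g := blk Hx \o S)); last by move=> t /=; rewrite -map_sh_blk.
rewrite map_comp.
have -> : map S (iota 0 (M x)) = iota 1 (M x).
  by rewrite (iotaDl 1 0) //.
have eM : M x = (M x - 1).+1 by have := Mpos Hx; lia.
have -> : iota 0 (M x) = 0 :: iota 1 (M x - 1) by rewrite [in LHS]eM.
have -> : iota 1 (M x) = iota 1 (M x - 1) ++ [:: M x].
  have eM' : M x = (M x - 1) + 1 by lia.
  by rewrite [in LHS]eM' iotaD; congr (_ ++ [:: _]); lia.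
rewrite /=.
have -> : 5 = size (blk Hx 0) by [].
rewrite rot_size_cat map_cat flatten_cat; congr (_ ++ _).
by rewrite -blkM; apply: cats0.
Qed.

Lemma count_sh x (Hx : 0 < x) v : count_mem (sh Hx v) (W Hx) = count_mem v (W Hx).
Proof.
have Hp : perm_eq (rot 5 (W Hx)) (W Hx) by rewrite perm_rot.
rewrite -(permP Hp) -mapW count_map.
by apply: eq_count => z /=; rewrite (inj_eq (@sh_inj x Hx)).
Qed.

Lemma count_const x (Hx : 0 < x) v : count_mem v (W Hx) = count_mem (vx Hx 0) (W Hx).
Proof.
rewrite -(vx_val Hx v); elim: (val v) => [|k IH] //.
by rewrite -sh_vx count_sh.
Qed.

Lemma alt_sh x (Hx : 0 < x) a b : a != b ->
  alternate (W Hx) (sh Hx a) (sh Hx b) = alternate (W Hx) a b.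
Proof.
move=> nab.
rewrite -(alt_rot 5); last by rewrite !count_const.
  by rewrite -mapW alt_map //; apply: sh_inj.
by rewrite (inj_eq (@sh_inj x Hx)).
Qed.

Lemma alt_shift x (Hx : 0 < x) a b k : vx Hx a != vx Hx b ->
  alternate (W Hx) (vx Hx (a + k)) (vx Hx (b + k)) = alternate (W Hx) (vx Hx a) (vx Hx b).
Proof.
move=> nab; elim: k => [|k IH]; first by rewrite !addn0.
rewrite !addnS -!sh_vx alt_sh //.
by rewrite vx_eq eqn_modDr -vx_eq.
Qed.

Arguments M : simpl never.

Definition pp x (Hx : 0 < x) d : pred 'I_(M x) := fun z => (z == vx Hx 0) || (z == vx Hx d).
Definition qq (d : nat) : pred nat := fun r => (r == 0) || (r == d).

Lemma alt_pp x (Hx : 0 < x) d :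
  alternate (W Hx) (vx Hx 0) (vx Hx d) =
  sorted (fun u v : nat => u != v) (map val (filter (pp Hx d) (W Hx))).
Proof. by rewrite sorted_map. Qed.

Lemma val_filter_blk x (Hx : 0 < x) d t : d < M x ->
  map val (filter (pp Hx d) (blk Hx t)) = filter (qq d) (map (modn^~ (M x)) (bl x t)).
Proof.
move=> hd; rewrite /blk filter_map -map_comp filter_map.
have -> : filter (preim (vx Hx) (pp Hx d)) (bl x t) = filter (preim (modn^~ (M x)) (qq d)) (bl x t).
  by apply: eq_filter => k; rewrite /= /pp /qq !vx_eq mod0n (modn_small hd).
by [].
Qed.

Lemma has_blk x (Hx : 0 < x) d t : d < M x ->
  has (pp Hx d) (blk Hx t) = has (qq d) (map (modn^~ (M x)) (bl x t)).
Proof.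
move=> hd; rewrite !has_filter -(val_filter_blk _ t hd).
by case: (filter _ _).
Qed.

Lemma flatten_filter_nil (T : Type) (f : nat -> seq T) s :
  flatten (map f s) = flatten (map f (filter (fun t => ~~ nilp (f t)) s)).
Proof.
elim: s => [|t s IH] //=; rewrite IH; case E: (f t) => [|a l] /=; by rewrite ?E.
Qed.

Lemma filtW x (Hx : 0 < x) d L : d < M x -> sorted ltn L ->
  (forall t, (t \in L) = (t < M x) && has (qq d) (map (modn^~ (M x)) (bl x t))) ->
  map val (filter (pp Hx d) (W Hx)) =
  flatten (map (fun t => filter (qq d) (map (modn^~ (M x)) (bl x t))) L).
Proof.
move=> hd hs hL.
rewrite /W filter_flatten map_flatten -!map_comp.
rewrite (eq_map (g := fun t => filter (qq d) (map (modn^~ (M x)) (bl x t)))); last first.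
  by move=> t /=; rewrite val_filter_blk.
rewrite flatten_filter_nil; congr (flatten (map _ _)).
apply: (irr_sorted_eq ltn_trans ltnn).
- by apply: sorted_filter; [apply: ltn_trans | apply: iota_ltn_sorted].
- exact: hs.
move=> t; rewrite mem_filter mem_iota hL add0n leq0n andTb andbC has_filter /nilp size_eq0.
by [].
Qed.

Lemma modcase k m : k < 2 * m -> (k < m /\ k %% m = k) \/ (m <= k /\ k %% m = k - m).
Proof.
case: (ltnP k m) => h hk; first by left; split => //; rewrite modn_small.
right; split => //.
by rewrite -{1}(subnK h) modnDr modn_small //; lia.
Qed.

Ltac genmod := repeat match goal with |- context [?k %% M ?y] =>
  let H := fresh "Hm" in
  have H := @modcase k (M y) ltac:(lia); move: H; generalize (k %% M y); intros end.

Ltac resif := repeat match goal with |- context [if ?c then _ else _] =>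
  first [ have -> : c = true by lia | have -> : c = false by lia ] end.

Lemma fT (T : Type) (p : pred T) a s : p a -> filter p (a :: s) = a :: filter p s.
Proof. by move=> /= ->. Qed.
Lemma fF (T : Type) (p : pred T) a s : ~~ p a -> filter p (a :: s) = filter p s.
Proof. by move=> /= /negbTE ->. Qed.
Lemma f0 (T : Type) (p : pred T) : filter p [::] = [::].
Proof. by []. Qed.

Local Arguments filter : simpl never.

Lemma modbig k m : m <= k < 2 * m -> k %% m = k - m.
Proof.
move=> /andP [h1 h2]; rewrite -{1}(subnK h1) modnDr modn_small //; lia.
Qed.

Ltac modsimp := repeat match goal with |- context [?k %% M ?y] =>
  first [ rewrite (@modn_small k (M y)); last by lia
        | rewrite (@modbig k (M y)); last by lia ] end.

Ltac sidemod := rewrite /qq; modsimp; lia.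
Ltac evalf := repeat first [ rewrite f0
   | (rewrite fT; last by sidemod) | (rewrite fF; last by sidemod) ].

Ltac memb := let t := fresh "t" in let ht := fresh "ht" in let hL := fresh "hL" in
  move=> t; case: (ltnP t (M _)) => ht /=;
  [ case hL: (t \in _);
    [ move: hL; rewrite !inE => hL;
      repeat (case/orP: hL => [/eqP -> | hL]; [rewrite /= /qq; modsimp; lia | ]);
      move/eqP: hL => ->; rewrite /= /qq; modsimp; lia
    | move: hL; rewrite !inE => /negbT; rewrite !negb_or => hL;
      apply/esym/negbTE; rewrite /= !negb_or /qq;
      repeat (apply/andP; split); genmod; intros; lia ]
  | rewrite !inE; lia ].

Lemma edge_x x (Hx : 0 < x) : 1 < x -> alternate (W Hx) (vx Hx 0) (vx Hx x).
Proof.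
move=> h1; have HM : M x = 4 * x by rewrite /M; lia.
rewrite alt_pp (@filtW x Hx x [:: 0; 1; x; x.+1; 2*x; 3*x]).
- rewrite /=; evalf; rewrite /=; modsimp; lia.
- lia.
- rewrite /=; lia.
memb.
Qed.

Lemma edge_2x x (Hx : 0 < x) : 1 < x -> alternate (W Hx) (vx Hx 0) (vx Hx (2 * x)).
Proof.
move=> h1; have HM : M x = 4 * x by rewrite /M; lia.
rewrite alt_pp (@filtW x Hx (2 * x) [:: 0; 1; x; 2 * x; (2 * x).+1; 3*x]).
- rewrite /=; evalf; rewrite /=; modsimp; lia.
- lia.
- rewrite /=; lia.
memb.
Qed.

Lemma edge_1 x (Hx : 0 < x) : 1 < x -> alternate (W Hx) (vx Hx 0) (vx Hx 1).
Proof.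
move=> h1; have HM : M x = 4 * x by rewrite /M; lia.
case: (ltnP 2 x) => h2; last first.
  have ex : x = 2 by lia.
  subst x; by vm_compute.
rewrite alt_pp (@filtW x Hx 1 [:: 0; 1; 2; x; x.+1; 2 * x; (2 * x).+1; 3*x; (3 * x).+1]).
- rewrite /=; evalf; rewrite /=; modsimp; lia.
- lia.
- rewrite /=; lia.
memb.
Qed.

Lemma nonedge x (Hx : 0 < x) r : 1 < x -> 0 < r < M x ->
  r \notin [:: 1; x; 2 * x; 3 * x; M x - 1] ->
  alternate (W Hx) (vx Hx 0) (vx Hx r) = false.
Proof.
move=> h1 hr; rewrite !inE !negb_or => hn.
have HM : M x = 4 * x by rewrite /M; lia.
have E : iota 0 (M x) = 0 :: 1 :: iota 2 (M x - 2).
  by rewrite [in LHS](_ : M x = (M x - 2).+2) //; lia.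
have EW : W Hx = blk Hx 0 ++ blk Hx 1 ++ flatten (map (blk Hx) (iota 2 (M x - 2))).
  by rewrite /W E.
rewrite alt_pp EW !filter_cat !map_cat !val_filter_blk; try lia.
rewrite /=; evalf; rewrite /=; modsimp.
apply/negbTE; rewrite negb_and; apply/orP; left; lia.
Qed.


Lemma count5 x (Hx : 0 < x) v : 1 < x -> count_mem v (W Hx) = 5.
Proof.
move=> h1; rewrite count_const.
have HM : M x = 4 * x by rewrite /M; lia.
rewrite -size_filter.
have -> : filter (pred1 (vx Hx 0)) (W Hx) = filter (pp Hx 0) (W Hx).
  by apply: eq_filter => z; rewrite /pp /= orbb.
rewrite -(size_map val) (@filtW x Hx 0 [:: 0; 1; x; 2 * x; 3 * x]).
- rewrite /=; evalf; by [].
- lia.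
- rewrite /=; lia.
memb.
Qed.

Lemma alt0 x (Hx : 0 < x) r : 1 < x -> 0 < r < M x ->
  alternate (W Hx) (vx Hx 0) (vx Hx r) = (r \in [:: 1; x; 2 * x; 3 * x; M x - 1]).
Proof.
move=> h1 hr; have HM : M x = 4 * x by rewrite /M; lia.
case hE: (r \in _); last by apply: nonedge => //; rewrite hE.
move: hE; rewrite !inE => /orP [/eqP -> | /orP [/eqP -> | /orP [/eqP -> | /orP [/eqP -> | /eqP ->]]]].
- exact: edge_1.
- exact: edge_x.
- exact: edge_2x.
- rewrite -(@alt_shift x Hx 0 (3 * x) x); last by rewrite vx_eq; modsimp; lia.
  have -> : vx Hx (3 * x + x) = vx Hx 0 by apply: val_inj => /=; modsimp; lia.
  by rewrite add0n alt_sym edge_x.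
- rewrite -(@alt_shift x Hx 0 (M x - 1) 1); last by rewrite vx_eq; modsimp; lia.
  have -> : vx Hx (M x - 1 + 1) = vx Hx 0 by apply: val_inj => /=; modsimp; lia.
  by rewrite add0n alt_sym edge_1.
Qed.

Lemma altE x (Hx : 0 < x) (u v : 'I_(M x)) : 1 < x -> u != v ->
  alternate (W Hx) u v = ((v + (M x - u)) %% M x \in [:: 1; x; 2 * x; 3 * x; M x - 1]).
Proof.
move=> h1 nuv; have HM : M x = 4 * x by rewrite /M; lia.
have hu := ltn_ord u; have hv := ltn_ord v.
have nuv' : vx Hx u != vx Hx v by rewrite !vx_val.
rewrite -{1}(vx_val Hx u) -{1}(vx_val Hx v) -(alt_shift (M x - u) nuv').
have -> : vx Hx (u + (M x - u)) = vx Hx 0 by apply: val_inj => /=; modsimp; lia.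
have -> : vx Hx (v + (M x - u)) = vx Hx ((v + (M x - u)) %% M x).
  by apply: val_inj => /=; rewrite modn_mod.
apply: alt0 => //.
have : (u : nat) != v by [].
genmod; intros; lia.
Qed.

Lemma C2nE x (u v : 'I_(M x)) : 1 < x -> u != v ->
  @C2n (2 * x) x u v = ((v + (M x - u)) %% M x \in [:: 1; x; 2 * x; 3 * x; M x - 1]).
Proof.
move=> h1 nuv; have HM : M x = 4 * x by rewrite /M; lia.
have hu := ltn_ord u; have hv := ltn_ord v.
have : (u : nat) != v by [].
rewrite /C2n /circulant /circ_dist nuv /= !inE.
rewrite -/(M x).
genmod; intros; case: leqP => h; lia.
Qed.

Unset Implicit Arguments.
Theorem theorem28 (n x : nat) :
  1 < x -> x < n -> n = 2 * x ->
  word_representable (@C2n n x) /\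
  exists k : nat, k <= 5 /\ k_representable (@C2n n x) k.
Proof.
move=> h1 _ en; subst n.
have Hx : 0 < x by lia.
have rep : represents (@C2n (2 * x) x) (W Hx).
  split.
    by move=> v; rewrite -has_pred1 has_count count5.
  move=> a b nab; rewrite (C2nE h1 nab) (altE Hx h1 nab); by [].
split; first by exists (W Hx).
exists 5; split => //; exists (W Hx); split => //.
by apply/forallP => v; rewrite count5.
Qed.
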